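(* Let $\sigma\in(0,1)$. In the setting described in the context, there are $B_h>0$, $h\le H+G$, such that for all sufficiently large $T$ and every $h\le H+G$, \[ (-1)^{\mathrm{j}(h)}\sum_p\frac{\mathrm{Re}\left(\overline{r(p)}a_{L_h}(p)\right)}{(1+|r(p)|^2)p^\sigma}\le-B_h\frac{(\log T)^{1-\sigma}}{\log\log T}, \] where $\mathrm{j}(h)=1$ if $h\le H$ and $\mathrm{j}(h)=0$ if $H<h\le H+G$. For $\sigma=1$ the same holds with the right-hand side replaced by $-B_h\log\log\log T$.
   Context: $\mathcal{S}_{\text{poly}}$: Dirichlet series $L(s)=\sum a_L(n)n^{-s}$, $a_L(1)=1$, absolutely convergent for $\mathrm{Re}\,s>1$, with $(s-1)^mL(s)$ entire of finite order, functional equation $L(s)\gamma(s)=\omega\overline{\gamma(1-\bar s)L(1-\bar s)}$, $\gamma(s)=Q^s\prod_k\Gamma(\lambda_ks+\mu_k)$, and Euler product $\prod_p\prod_{j\le\partial_L}(1-a_{L,j}(p)p^{-s})^{-1}$ with $a_{L,j}(p)\ll p^{\theta_L}$, $\theta_L<1/4$; Ramanujan Hypothesis: $a_L(n)\ll_\epsilon n^\epsilon$. Setting: integers $H,G\ge0$; $L_1,\dots,L_{H+G}\in\mathcal{S}_{\text{poly}}$ satisfying the Ramanujan Hypothesis with $\frac{\log x}{x}\sum_{p\le x}a_{L_h}(p)\overline{a_{L_g}(p)}\to\kappa(h,g)$, $\kappa(h,h)>0$, $\kappa(h,g)=0$ for $h\ne g$. Fix $\alpha\in(0,1)$, $0<\beta<\alpha/2$,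 a sufficiently small $\epsilon>0$, a sufficiently large constant $C$, and $x_\epsilon$ large enough that for $x\ge x_\epsilon$ and all $h$: $|\sum_{p\le x}|a_{L_h}(p)|^2-\kappa(h,h)\frac{x}{\log x}|\le\frac{\epsilon x}{\log x}$ and $|\sum_{g\ne h}\sum_{p\le x}a_{L_h}(p)a_{L_g}(p)|\le\frac{\epsilon x}{\log x}$. $r(p)$ is defined for primes by $Cr(p)=\sum_{h\le H}a_{L_h}(p)-\sum_{H<h\le H+G}a_{L_h}(p)$ if $x_\epsilon\le p\le\beta\log T$ and $r(p)=0$ otherwise. *)

(* Defs.v *)
From Stdlib Require Import Reals Lra List.
From Coquelicot Require Import Coquelicot.
From mathcomp Require prime.
Open Scope R_scope.

Fixpoint cpow (z : C) (n : nat) : C :=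
  match n with O => RtoC 1 | S m => Cmult z (cpow z m) end.

Fixpoint csum0 (f : nat -> C) (k : nat) : C :=
  match k with O => f O | S m => Cplus (csum0 f m) (f (S m)) end.

Fixpoint csum1 (f : nat -> C) (n : nat) : C :=
  match n with O => RtoC 0 | S m => Cplus (csum1 f m) (f (S m)) end.

Fixpoint cpsum (f : nat -> C) (N : nat) : C :=
  match N with
  | O => RtoC 0
  | S m => Cplus (cpsum f m) (if prime.prime (S m) then f (S m) else RtoC 0)
  end.
Fixpoint rpsum (f : nat -> R) (N : nat) : R :=
  match N with
  | O => 0
  | S m => rpsum f m + (if prime.prime (S m) then f (S m) else 0)
  end.

(* floor of a real as a nat (0 for negative reals) *)
Definition nfloor (x : R) : nat := Z.to_nat (Int_part x).

Definition cprimesum (f : nat -> C) (x : R) : C := cpsum f (nfloor x).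
Definition rprimesum (f : nat -> R) (x : R) : R := rpsum f (nfloor x).

(* complete homogeneous symmetric polynomial h_k(x_1,...,x_d) *)
Fixpoint hcomp (l : list C) (k : nat) : C :=
  match l with
  | nil => match k with O => RtoC 1 | _ => RtoC 0 end
  | x :: xs => csum0 (fun i => Cmult (cpow x i) (hcomp xs (k - i))) k
  end.

(* The arithmetic part of the axioms of S_poly for L(s) = sum a(n) n^-s:
   a(1) = 1, absolute convergence for Re s > 1, and the Euler product
   prod_p prod_{j <= d} (1 - alpha_j(p) p^-s)^-1 with alpha_j(p) << p^theta,
   theta < 1/4, written at the level of coefficients (a multiplicative,
   a(p^k) = h_k(alpha_1(p),...,alpha_d(p))). *)
Definition Spoly_arith (a : nat -> C) : Prop :=
  a 1%nat = RtoC 1 /\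
  (forall s : R, 1 < s ->
     ex_series (fun n : nat => Cmod (a (S n)) / Rpower (INR (S n)) s)) /\
  exists (d : nat) (theta K : R) (alpha : nat -> nat -> C),
    theta < 1/4 /\
    (forall j p, (1 <= j <= d)%nat -> prime.prime p = true ->
        Cmod (alpha j p) <= K * Rpower (INR p) theta) /\
    (forall m n, (1 <= m)%nat -> (1 <= n)%nat -> Nat.gcd m n = 1%nat ->
        a (m * n)%nat = Cmult (a m) (a n)) /\
    (forall p k, prime.prime p = true ->
        a (p ^ k)%nat = hcomp (map (fun j => alpha j p) (seq 1 d)) k).

Definition Ramanujan (a : nat -> C) : Prop :=
  forall eps : R, 0 < eps -> exists K : R,
    forall n : nat, (1 <= n)%nat -> Cmod (a n) <= K * Rpower (INR n) eps.

Definition prime_corr_limit (a b : nat -> C) (k : C) : Prop :=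
  forall e : R, 0 < e -> exists X : R, forall x : R, X <= x ->
    Cmod (Cminus (Cmult (RtoC (ln x / x))
                        (cprimesum (fun p => Cmult (a p) (Cconj (b p))) x)) k) < e.

Definition good_xeps (H G : nat) (a : nat -> nat -> C) (kappa : nat -> nat -> C)
    (eps xe : R) : Prop :=
  forall x : R, xe <= x -> forall h : nat, (1 <= h <= H + G)%nat ->
    Rabs (rprimesum (fun p => (Cmod (a h p)) ^ 2) x - Re (kappa h h) * (x / ln x))
      <= eps * x / ln x /\
    Cmod (csum1 (fun g => if Nat.eqb g h then RtoC 0
                          else cprimesum (fun p => Cmult (a h p) (Cconj (a g p))) x)
                (H + G))
      <= eps * x / ln x.

Definition rcoef (H G : nat) (a : nat -> nat -> C) (Cc xe beta T : R) (p : nat) : C :=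
  if Rle_dec xe (INR p) then
    if Rle_dec (INR p) (beta * ln T) then
      Cmult (RtoC (/ Cc))
        (csum1 (fun h => if Nat.leb h H then a h p else Copp (a h p)) (H + G))
    else RtoC 0
  else RtoC 0.

(* sum_p Re(conj(r(p)) a_h(p)) / ((1 + |r(p)|^2) p^sigma); the terms vanish
   for p > beta log T, so the sum over all primes is this finite sum. *)
Definition Ssum (H G : nat) (a : nat -> nat -> C) (Cc xe beta T : R)
    (h : nat) (sigma : R) : R :=
  rprimesum (fun p =>
      let r := rcoef H G a Cc xe beta T p in
      Re (Cmult (Cconj r) (a h p)) / ((1 + (Cmod r) ^ 2) * Rpower (INR p) sigma))
    (beta * ln T).

Definition jsign (H h : nat) : R := if Nat.leb h H then -1 else 1.

(* Main.v *)
Require Import Defs.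
From Stdlib Require Import Reals.
From Coquelicot Require Import Coquelicot.
From Stdlib Require Import Lra List Lia ZArith.
From mathcomp Require prime.
Open Scope R_scope.

Definition gconv (x : C) (u : nat -> C) (k : nat) : C :=
  csum0 (fun i => Cmult (cpow x i) (u (k - i)%nat)) k.

Lemma csum0_ext f g k : (forall i, (i <= k)%nat -> f i = g i) -> csum0 f k = csum0 g k.
Proof.
  induction k; intros Hf; simpl. apply Hf; lia.
  rewrite IHk by (intros; apply Hf; lia). rewrite Hf by lia. reflexivity.
Qed.

Lemma csum0_shift f k : csum0 f (S k) = Cplus (f O) (csum0 (fun i => f (S i)) k).
Proof.
  induction k. simpl. reflexivity.
  change (csum0 f (S (S k))) with (Cplus (csum0 f (S k)) (f (S (S k)))).
  rewrite IHk. simpl. ring.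
Qed.

Lemma csum0_scal c f k : csum0 (fun i => Cmult c (f i)) k = Cmult c (csum0 f k).
Proof. induction k; simpl. reflexivity. rewrite IHk. ring. Qed.

Lemma gconv_0 x u : gconv x u 0 = u O.
Proof. unfold gconv. simpl. ring. Qed.

Lemma gconv_S x u k : gconv x u (S k) = Cplus (u (S k)) (Cmult x (gconv x u k)).
Proof.
  unfold gconv. rewrite csum0_shift. simpl cpow. rewrite Nat.sub_0_r.
  f_equal. ring. rewrite <- csum0_scal. apply csum0_ext. intros i Hi.
  simpl. replace (k - i)%nat with (match i with O => k | S l => (k - S l)%nat end) by (destruct i; lia).
  destruct i; simpl; ring.
Qed.

Lemma gconv_ext x u v k : (forall j, u j = v j) -> gconv x u k = gconv x v k.
Proof. intros H. unfold gconv. apply csum0_ext. intros. rewrite H. reflexivity. Qed.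

Definition Dop (y : C) (v : nat -> C) (k : nat) : C :=
  match k with O => v O | S k' => Cminus (v (S k')) (Cmult y (v k')) end.

Lemma Dop_ext y u v k : (forall j, u j = v j) -> Dop y u k = Dop y v k.
Proof. intros H. destruct k; simpl; rewrite !H; reflexivity. Qed.

Lemma D_gconv x u k : Dop x (gconv x u) k = u k.
Proof. destruct k; simpl. apply gconv_0. rewrite gconv_S. ring. Qed.

Lemma D_gconv_S y x u k :
  Dop y (gconv x u) (S k) = Cplus (Dop y u (S k)) (Cmult x (Dop y (gconv x u) k)).
Proof.
  destruct k.
  - simpl. rewrite !gconv_S, !gconv_0. ring.
  - change (Dop y (gconv x u) (S (S k))) with
      (Cminus (gconv x u (S (S k))) (Cmult y (gconv x u (S k)))).
    change (Dop y (gconv x u) (S k)) with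
      (Cminus (gconv x u (S k)) (Cmult y (gconv x u k))).
    rewrite (gconv_S x u (S k)), (gconv_S x u k). simpl. ring.
Qed.

Lemma D_comm y x u k : Dop y (gconv x u) k = gconv x (Dop y u) k.
Proof.
  induction k.
  - simpl. rewrite !gconv_0. reflexivity.
  - rewrite D_gconv_S, IHk, gconv_S. reflexivity.
Qed.

Fixpoint Dl (ys : list C) (v : nat -> C) (k : nat) : C :=
  match ys with nil => v k | y :: ys' => Dop y (Dl ys' v) k end.

Lemma Dl_ext ys u v k : (forall j, u j = v j) -> Dl ys u k = Dl ys v k.
Proof.
  revert k; induction ys; intros k H; simpl. apply H.
  apply Dop_ext. intros; apply IHys; auto.
Qed.

Lemma Dl_comm ys x u k : Dl ys (gconv x u) k = gconv x (Dl ys u) k.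
Proof.
  revert k; induction ys; intros k; simpl. reflexivity.
  rewrite (Dop_ext a _ (gconv x (Dl ys u))) by (intros; apply IHys).
  apply D_comm.
Qed.

Definition delta (k : nat) : C := match k with O => RtoC 1 | _ => RtoC 0 end.

Lemma hcomp_cons x xs k : hcomp (x :: xs) k = gconv x (hcomp xs) k.
Proof. reflexivity. Qed.

Lemma Dl_hcomp xs k : Dl xs (hcomp xs) k = delta k.
Proof.
  revert k; induction xs; intros k; simpl. destruct k; reflexivity.
  rewrite (Dop_ext a _ (gconv a (Dl xs (hcomp xs)))).
  2:{ intros j. rewrite <- Dl_comm. apply Dl_ext. intros; apply hcomp_cons. }
  rewrite D_gconv. apply IHxs.
Qed.

Lemma gconv_delta x k : gconv x delta k = cpow x k.
Proof.
  induction k. rewrite gconv_0. reflexivity.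
  rewrite gconv_S, IHk. simpl. ring.
Qed.

Lemma Dl_geo l x0 : In x0 l -> exists ys, forall k, Dl ys (hcomp l) k = cpow x0 k.
Proof.
  induction l as [|x xs IH]; intros Hin. destruct Hin.
  destruct Hin as [<- | Hin].
  - exists xs. intros k.
    rewrite (Dl_ext xs _ (gconv x (hcomp xs))) by (intros; apply hcomp_cons).
    rewrite Dl_comm. rewrite (gconv_ext x _ delta) by (intros; apply Dl_hcomp).
    apply gconv_delta.
  - destruct (IH Hin) as [ys Hys]. exists (x :: ys). intros k. simpl.
    rewrite (Dop_ext x _ (gconv x (Dl ys (hcomp xs)))).
    2:{ intros j. rewrite <- Dl_comm. apply Dl_ext. intros; apply hcomp_cons. }
    rewrite D_gconv. apply Hys.
Qed.

Lemma Dl_bound ys v K q : 0 < q -> (forall k, Cmod (v k) <= K * q ^ k) ->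
  exists K', forall k, Cmod (Dl ys v k) <= K' * q ^ k.
Proof.
  intros Hq. revert K. induction ys; intros K Hv; simpl. exists K; auto.
  destruct (IHys K Hv) as [K1 H1].
  assert (HK1 : 0 <= K1). { specialize (H1 O). simpl in H1. pose proof (Cmod_ge_0 (Dl ys v 0)). lra. }
  exists (K1 * (1 + Cmod a / q)). intros k. destruct k; simpl.
  - specialize (H1 O). simpl in H1. assert (0 <= Cmod a / q).
    { apply Rdiv_le_0_compat; [apply Cmod_ge_0| lra]. } nra.
  - unfold Cminus. eapply Rle_trans. apply Cmod_triangle. rewrite Cmod_opp, Cmod_mult.
    pose proof (H1 (S k)) as A. pose proof (H1 k) as B. simpl in A.
    assert (Hqk : 0 < q ^ k) by (apply pow_lt; lra).
    assert (Cmod a * Cmod (Dl ys v k) <= Cmod a * (K1 * q ^ k)).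
    { apply Rmult_le_compat_l. apply Cmod_ge_0. auto. }
    assert (E : K1 * (1 + Cmod a / q) * (q * q ^ k) = K1 * (q * q ^ k) + Cmod a * (K1 * q ^ k)).
    { field. lra. }
    rewrite E. lra.
Qed.

Lemma pow_unbounded r K : 1 < r -> exists k, K < r ^ k.
Proof.
  intros Hr. destruct (INR_unbounded (K / (r - 1))) as [n Hn].
  exists n. assert (H2 : 1 + INR n * (r - 1) <= r ^ n).
  { clear Hn. induction n. simpl. lra. rewrite S_INR. simpl.
    assert (0 <= INR n) by apply pos_INR. assert (1 <= r ^ n) by (apply pow_R1_Rle; lra). nra. }
  apply (Rmult_lt_compat_r (r - 1)) in Hn; [|lra].
  unfold Rdiv in Hn. rewrite Rmult_assoc, Rinv_l, Rmult_1_r in Hn by lra. lra.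
Qed.

Lemma hcomp_roots_bound l K q : 0 < q -> (forall k, Cmod (hcomp l k) <= K * q ^ k) ->
  forall x, In x l -> Cmod x <= q.
Proof.
  intros Hq Hb x Hx. destruct (Dl_geo l x Hx) as [ys Hys].
  destruct (Dl_bound ys (hcomp l) K q Hq Hb) as [K' HK'].
  destruct (Rle_lt_dec (Cmod x) q) as [|Hlt]; auto. exfalso.
  destruct (pow_unbounded (Cmod x / q) K') as [k Hk].
  { apply (Rmult_lt_reg_r q); auto. unfold Rdiv. rewrite Rmult_assoc, Rinv_l; lra. }
  specialize (HK' k). rewrite Hys, Cmod_pow in HK'.
  unfold Rdiv in Hk. rewrite Rpow_mult_distr, pow_inv in Hk.
  assert (Hqk : 0 < q ^ k) by (apply pow_lt; lra).
  apply (Rmult_lt_compat_r (q ^ k)) in Hk; auto.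
  rewrite Rmult_assoc, Rinv_l in Hk by lra. lra.
Qed.

Lemma hcomp_0 l : hcomp l 0 = RtoC 1.
Proof. induction l; simpl. reflexivity. rewrite IHl. ring. Qed.

Lemma hcomp_1_bound l : (forall x, In x l -> Cmod x <= 1) -> Cmod (hcomp l 1) <= INR (length l).
Proof.
  induction l; intros H. simpl. rewrite Cmod_0. lra.
  change (length (a::l)) with (S (length l)). rewrite S_INR, hcomp_cons. unfold gconv.
  simpl csum0. simpl cpow. simpl Nat.sub.
  rewrite hcomp_0.
  replace (Cplus (Cmult (RtoC 1) (hcomp l 1)) (Cmult (Cmult a (RtoC 1)) (RtoC 1)))
    with (Cplus (hcomp l 1) a) by ring.
  eapply Rle_trans. apply Cmod_triangle.
  pose proof (IHl (fun x Hx => H x (or_intror Hx))). pose proof (H a (or_introl eq_refl)). lra.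
Qed.


Lemma prime_ge2 p : prime.prime p = true -> (2 <= p)%nat.
Proof.
  intros H. destruct p as [|[|p]]; try lia; vm_compute in H; discriminate.
Qed.

Lemma ln_pos x : 1 < x -> 0 < ln x.
Proof. intros. rewrite <- ln_1. apply ln_increasing; lra. Qed.

Lemma Rpower_pow_eps x k e : 0 < x -> Rpower (x ^ k) e = (Rpower x e) ^ k.
Proof.
  intros Hx. rewrite <- (Rpower_pow k x Hx), <- Rpower_pow by (apply exp_pos).
  rewrite !Rpower_mult. f_equal. ring.
Qed.

Lemma a_bounded (a : nat -> C) : Spoly_arith a -> Ramanujan a ->
  exists D, 0 <= D /\ forall p, prime.prime p = true -> Cmod (a p) <= D.
Proof.
  intros [_ [_ [d [theta [K [alpha [_ [_ [_ Hpk]]]]]]]]] Hram.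
  exists (INR d). split. apply pos_INR. intros p Hp.
  pose proof (prime_ge2 p Hp) as Hp2.
  assert (HpR : 2 <= INR p) by (replace 2 with (INR 2) by (simpl; lra); apply le_INR; lia).
  set (l := map (fun j => alpha j p) (seq 1 d)).
  assert (Hx : forall x, In x l -> Cmod x <= 1).
  { intros x Hx.
    assert (Heps : forall e, 0 < e -> Cmod x <= Rpower (INR p) e).
    { intros e He. destruct (Hram e He) as [K' HK'].
      apply (hcomp_roots_bound l K'); auto. apply exp_pos.
      intros k. unfold l. rewrite <- Hpk by auto.
      assert (H1 : (1 <= p ^ k)%nat). { apply Nat.le_trans with (1 ^ k)%nat. rewrite Nat.pow_1_l; lia. apply Nat.pow_le_mono_l. lia. }
      eapply Rle_trans. apply HK'. auto. rewrite pow_INR, Rpower_pow_eps by lra. lra. }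
    destruct (Rle_lt_dec (Cmod x) 1) as [|Hlt]; auto. exfalso.
    assert (Hlp : 0 < ln (INR p)) by (apply ln_pos; lra).
    assert (Hlx : 0 < ln (Cmod x)) by (apply ln_pos; lra).
    specialize (Heps (ln (Cmod x) / (2 * ln (INR p)))).
    unfold Rpower in Heps.
    replace (ln (Cmod x) / (2 * ln (INR p)) * ln (INR p)) with (ln (Cmod x) / 2) in Heps by (field; lra).
    assert (exp (ln (Cmod x) / 2) < exp (ln (Cmod x))) by (apply exp_increasing; lra).
    rewrite exp_ln in H by lra.
    assert (0 < ln (Cmod x) / (2 * ln (INR p))) by (apply Rdiv_lt_0_compat; lra).
    specialize (Heps H0). lra. }
  replace p with (p ^ 1)%nat by apply Nat.pow_1_r. rewrite Hpk by auto.
  assert (Hd : length l = d) by (unfold l; rewrite length_map, length_seq; auto).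
  fold l. rewrite <- Hd. apply hcomp_1_bound. auto.
Qed.


Fixpoint rs (F : nat -> R) (N : nat) : R :=
  match N with O => 0 | S n => rs F n + F n end.

Lemma rs_ext F G N : (forall m, (m < N)%nat -> F m = G m) -> rs F N = rs G N.
Proof. induction N; intros H; simpl; auto. rewrite IHN by (intros; apply H; lia). rewrite H by lia. auto. Qed.

Lemma rs_le F G N : (forall m, (m < N)%nat -> F m <= G m) -> rs F N <= rs G N.
Proof. induction N; intros H; simpl. lra. pose proof (IHN (fun m Hm => H m ltac:(lia))). pose proof (H N ltac:(lia)). lra. Qed.

Lemma rs_plus F G N : rs (fun m => F m + G m) N = rs F N + rs G N.
Proof. induction N; simpl. lra. rewrite IHN. lra. Qed.

Lemma rs_scal c F N : rs (fun m => c * F m) N = c * rs F N.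
Proof. induction N; simpl. lra. rewrite IHN. lra. Qed.

Lemma rs_nonneg F N : (forall m, (m < N)%nat -> 0 <= F m) -> 0 <= rs F N.
Proof. intros H. replace 0 with (rs (fun _ => 0) N). apply rs_le; auto. induction N; simpl; auto. rewrite IHN; auto. lra. Qed.

Lemma rs_abs F N : Rabs (rs F N) <= rs (fun m => Rabs (F m)) N.
Proof. induction N; simpl. rewrite Rabs_R0. lra. eapply Rle_trans. apply Rabs_triang. lra. Qed.

Lemma rs_cut e M N : rs (fun m => if Nat.ltb m M then e m else 0) N = rs e (Nat.min N M).
Proof.
  induction N. simpl. auto. cbn [rs]. rewrite IHN.
  destruct (Nat.ltb_spec N M).
  - replace (Nat.min (S N) M) with (S (Nat.min N M)) by lia. replace (Nat.min N M) with N by lia. cbn [rs]. auto.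
  - replace (Nat.min (S N) M) with M by lia. replace (Nat.min N M) with M by lia. lra.
Qed.

Lemma rs_mono e M N : (forall m, 0 <= e m) -> (M <= N)%nat -> rs e M <= rs e N.
Proof. intros He H. induction H. lra. simpl. pose proof (He m). lra. Qed.

Lemma rpsum_ext F G N : (forall m, prime.prime m = true -> F m = G m) -> rpsum F N = rpsum G N.
Proof. intros H. induction N; simpl; auto. rewrite IHN. destruct (prime.prime (S N)) eqn:E; auto. rewrite H; auto. Qed.

Lemma rpsum_le F G N : (forall m, prime.prime m = true -> F m <= G m) -> rpsum F N <= rpsum G N.
Proof. intros H. induction N; simpl. lra. destruct (prime.prime (S N)) eqn:E; auto. pose proof (H _ E). lra. lra. Qed.

Lemma rpsum_plus F G N : rpsum (fun m => F m + G m) N = rpsum F N + rpsum G N.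
Proof. induction N; simpl. lra. rewrite IHN. destruct (prime.prime (S N)); lra. Qed.

Lemma rpsum_scal c F N : rpsum (fun m => c * F m) N = c * rpsum F N.
Proof. induction N; simpl. lra. rewrite IHN. destruct (prime.prime (S N)); lra. Qed.

Lemma rpsum_nonneg F N : (forall m, prime.prime m = true -> 0 <= F m) -> 0 <= rpsum F N.
Proof. intros H. induction N; simpl. lra. destruct (prime.prime (S N)) eqn:E; auto. pose proof (H _ E). lra. lra. Qed.

Lemma rpsum_mono F M N : (forall m, prime.prime m = true -> 0 <= F m) -> (M <= N)%nat -> rpsum F M <= rpsum F N.
Proof. intros He H. induction H. lra. simpl. destruct (prime.prime (S m)) eqn:E. pose proof (He _ E). lra. lra. Qed.

Lemma nfloor_INR m : Defs.nfloor (INR m) = m.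
Proof. unfold Defs.nfloor. rewrite Int_part_INR. apply Nat2Z.id. Qed.

Lemma abel b f N :
  rpsum (fun p => b p * f p) N = rpsum b N * f N + rs (fun m => rpsum b m * (f m - f (S m))) N.
Proof.
  induction N; simpl. lra. rewrite IHN.
  destruct (prime.prime (S N)); ring.
Qed.

Definition fpow (s : R) (m : nat) : R := / Rpower (INR m) s.
Definition gfun (m : nat) : R := INR m / ln (INR m).
Definition Psi (s : R) (N : nat) : R :=
  gfun N * fpow s N + rs (fun m => if Nat.leb 2 m then gfun m * (fpow s m - fpow s (S m)) else 0) N.

Definition density (b : nat -> R) (k : R) : Prop :=
  forall e, 0 < e -> exists X, forall x, X <= x -> Rabs (ln x / x * rprimesum b x - k) < e.

Lemma INR2 m : (2 <= m)%nat -> 2 <= INR m.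
Proof. intros. replace 2 with (INR 2) by (simpl; lra). apply le_INR. auto. Qed.

Lemma gfun_pos m : (2 <= m)%nat -> 0 < gfun m.
Proof. intros H. pose proof (INR2 m H). unfold gfun. apply Rdiv_lt_0_compat. lra. apply ln_pos. lra. Qed.

Lemma fpow_pos s m : 0 < fpow s m.
Proof. unfold fpow. apply Rinv_0_lt_compat. apply exp_pos. Qed.

Lemma fpow_decr s m : 0 <= s -> (1 <= m)%nat -> 0 <= fpow s m - fpow s (S m).
Proof.
  intros Hs Hm. unfold fpow. assert (1 <= INR m) by (replace 1 with (INR 1) by auto; apply le_INR; auto).
  assert (Rpower (INR m) s <= Rpower (INR (S m)) s).
  { apply Rle_Rpower_l; auto. rewrite S_INR. lra. }
  assert (0 < Rpower (INR m) s) by apply exp_pos.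
  assert (/ Rpower (INR (S m)) s <= / Rpower (INR m) s) by (apply Rinv_le_contravar; lra). lra.
Qed.

Lemma Psi_nonneg s N : 0 <= s -> (2 <= N)%nat -> gfun N * fpow s N <= Psi s N.
Proof.
  intros Hs HN. unfold Psi. assert (0 <= rs (fun m => if Nat.leb 2 m then gfun m * (fpow s m - fpow s (S m)) else 0) N).
  { apply rs_nonneg. intros m _. destruct (Nat.leb_spec 2 m). apply Rmult_le_pos.
    pose proof (gfun_pos m H); lra. apply fpow_decr; auto; lia. lra. }
  lra.
Qed.

Lemma nat_above (X : R) : exists N0 : nat, X <= INR N0 /\ (2 <= N0)%nat.
Proof.
  destruct (INR_unbounded X) as [n Hn]. exists (n + 2)%nat. split. rewrite plus_INR. simpl. pose proof (pos_INR n). lra. lia.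
Qed.

Lemma key_lemma s b k : 0 < s -> density b k -> forall e, 0 < e ->
  exists c N0, forall N, (N0 <= N)%nat ->
    Rabs (rpsum (fun p => b p * fpow s p) N - k * Psi s N) <= e * Psi s N + c.
Proof.
  intros Hs Hd e He. destruct (Hd e He) as [X HX].
  destruct (nat_above X) as [N0 [HN0 HN02]].
  assert (HS : forall m, (N0 <= m)%nat -> Rabs (rpsum b m - k * gfun m) <= e * gfun m).
  { intros m Hm. assert (HmX : X <= INR m) by (eapply Rle_trans; [apply HN0| apply le_INR; auto]).
    specialize (HX _ HmX). unfold rprimesum in HX. rewrite nfloor_INR in HX.
    assert (Hg := gfun_pos m ltac:(lia)). pose proof (INR2 m ltac:(lia)).
    assert (Hl : 0 < ln (INR m)) by (apply ln_pos; lra).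
    replace (rpsum b m - k * gfun m) with (gfun m * (ln (INR m) / INR m * rpsum b m - k)).
    2:{ unfold gfun. field. lra. }
    rewrite Rabs_mult, Rabs_pos_eq by lra. rewrite Rmult_comm. apply Rmult_le_compat_r; lra. }
  set (D := fun m => fpow s m - fpow s (S m)).
  set (t := fun m => rpsum b m * D m - k * (if Nat.leb 2 m then gfun m * D m else 0)).
  set (ee := fun m => Rabs (rpsum b m * D m) + Rabs (k * (if Nat.leb 2 m then gfun m * D m else 0))).
  exists (rs ee N0), N0. intros N HN.
  assert (E : rpsum (fun p => b p * fpow s p) N - k * Psi s N = (rpsum b N - k * gfun N) * fpow s N + rs t N).
  { rewrite abel. unfold Psi. rewrite Rmult_plus_distr_l.
    replace (rs t N) with (rs (fun m => rpsum b m * (fpow s m - fpow s (S m))) N + (-k) * rs (fun m => if Nat.leb 2 m then gfun m * (fpow s m - fpow s (S m)) else 0) N).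
    ring.
    rewrite <- rs_scal, <- rs_plus. apply rs_ext. intros. unfold t, D. ring. }
  rewrite E. eapply Rle_trans. apply Rabs_triang.
  assert (H1 : Rabs ((rpsum b N - k * gfun N) * fpow s N) <= e * (gfun N * fpow s N)).
  { rewrite Rabs_mult, (Rabs_pos_eq (fpow s N)) by (pose proof (fpow_pos s N); lra).
    rewrite <- Rmult_assoc. apply Rmult_le_compat_r. pose proof (fpow_pos s N); lra. apply HS; auto. }
  assert (H2 : Rabs (rs t N) <= e * rs (fun m => if Nat.leb 2 m then gfun m * D m else 0) N + rs ee N0).
  { eapply Rle_trans. apply rs_abs.
    eapply Rle_trans with (rs (fun m => e * (if Nat.leb 2 m then gfun m * D m else 0) + (if Nat.ltb m N0 then ee m else 0)) N).
    { apply rs_le. intros m Hm. destruct (Nat.ltb_spec m N0).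
      - assert (0 <= e * (if Nat.leb 2 m then gfun m * D m else 0)).
        { apply Rmult_le_pos. lra. destruct (Nat.leb_spec 2 m). apply Rmult_le_pos. pose proof (gfun_pos m H0). lra.
          apply fpow_decr; lia || lra. lra. }
        unfold t, ee. eapply Rle_trans. unfold Rminus. apply Rabs_triang. rewrite Rabs_Ropp. lra.
      - unfold t. replace (Nat.leb 2 m) with true by (symmetry; apply Nat.leb_le; lia).
        replace (rpsum b m * D m - k * (gfun m * D m)) with ((rpsum b m - k * gfun m) * D m) by ring.
        assert (0 <= D m) by (apply fpow_decr; lia || lra).
        rewrite Rabs_mult, (Rabs_pos_eq (D m)) by lra.
        specialize (HS m H). nra. }
    rewrite rs_plus, rs_scal, rs_cut. apply Rplus_le_compat_l.
    apply rs_mono. intros; unfold ee. pose proof (Rabs_pos (rpsum b m * D m)). pose proof (Rabs_pos (k * (if Nat.leb 2 m then gfun m * D m else 0))). lra. lia. }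
  unfold Psi. unfold D in H2. lra.
Qed.


Lemma ln_le_sub1 x : 0 < x -> ln x <= x - 1.
Proof. intros. pose proof (exp_ineq1_le (ln x)). rewrite exp_ln in H0; lra. Qed.

Lemma nfloor_bounds y : 0 <= y -> INR (Defs.nfloor y) <= y /\ y - 1 < INR (Defs.nfloor y).
Proof.
  intros Hy. unfold Defs.nfloor. destruct (base_Int_part y) as [H1 H2].
  assert (0 <= Int_part y)%Z. { assert (IZR (-1) < IZR (Int_part y)) by (simpl; lra). apply lt_IZR in H. lia. }
  rewrite INR_IZR_INZ, Z2Nat.id by auto. lra.
Qed.

Lemma nfloor_le y p : (1 <= p)%nat -> (p <= Defs.nfloor y)%nat -> INR p <= y.
Proof.
  intros H1 H2. destruct (Rle_lt_dec 0 y).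
  - destruct (nfloor_bounds y r). apply le_INR in H2. lra.
  - exfalso. unfold Defs.nfloor in H2. destruct (base_Int_part y).
    assert (Int_part y < 0)%Z. { apply lt_IZR. simpl. lra. }
    destruct (Int_part y); try lia.
Qed.

Lemma big_u M T : exp (exp M) <= T -> exp M <= ln T /\ M <= ln (ln T).
Proof.
  intros H. assert (exp M <= ln T). { rewrite <- (ln_exp (exp M)). apply ln_le. apply exp_pos. auto. }
  split; auto. rewrite <- (ln_exp M). apply ln_le. apply exp_pos. auto.
Qed.

Lemma exp_ge_sq z : 0 <= z -> z * z / 4 <= exp z.
Proof.
  intros Hz. replace (exp z) with (exp (z/2) * exp (z/2)) by (rewrite <- exp_plus; f_equal; field).
  pose proof (exp_ineq1_le (z/2)). nra.
Qed.

Lemma psi_lower_lt s beta : 0 < s < 1 -> 0 < beta ->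
  exists c, 0 < c /\ exists M, forall T, exp (exp M) <= T ->
   c * (Rpower (ln T) (1 - s) / ln (ln T)) <= Psi s (Defs.nfloor (beta * ln T)) /\
   (2 <= Defs.nfloor (beta * ln T))%nat.
Proof.
  intros Hs Hb. set (a := 1 - s).
  exists (Rpower (beta/2) a / 2). split. apply Rdiv_lt_0_compat; [apply exp_pos| lra].
  exists (Rmax 1 (Rmax (4 / beta) (ln beta))). intros T HT.
  destruct (big_u _ _ HT) as [H1 H2]. set (u := ln (ln T)) in *.
  assert (Hu1 : 1 <= u) by (eapply Rle_trans; [apply Rmax_l| apply H2]).
  assert (Hu2 : 4 / beta <= u) by (eapply Rle_trans; [eapply Rle_trans; [apply Rmax_l|apply Rmax_r]| apply H2]).
  assert (Hu3 : ln beta <= u) by (eapply Rle_trans; [eapply Rle_trans; [apply Rmax_r|apply Rmax_r]| apply H2]).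
  assert (HlT : u + 1 <= ln T). { assert (exp u = ln T). unfold u. apply exp_ln. eapply Rlt_le_trans; [apply exp_pos| apply H1].
     pose proof (exp_ineq1_le u). lra. }
  set (y := beta * ln T).
  assert (Hy : 4 <= y). { unfold y. assert (4 / beta * beta = 4) by (field; lra).
     assert (4 / beta * beta <= ln T * beta) by (apply Rmult_le_compat_r; lra). nra. }
  destruct (nfloor_bounds y ltac:(lra)) as [Hn1 Hn2]. set (N := Defs.nfloor y) in *.
  assert (HN2 : (2 <= N)%nat). { assert (INR 1 < INR N) by (simpl; lra). apply INR_lt in H. lia. }
  split; auto.
  eapply Rle_trans; [| apply Psi_nonneg; auto; lra].
  assert (HNpos : 0 < INR N) by lra.
  assert (HlN : 0 < ln (INR N)) by (apply ln_pos; lra).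
  assert (E : gfun N * fpow s N = Rpower (INR N) a / ln (INR N)).
  { unfold gfun, fpow. assert (Rpower (INR N) a * Rpower (INR N) s = INR N).
    { rewrite <- Rpower_plus. unfold a. replace (1 - s + s) with 1 by ring. apply Rpower_1; auto. }
    assert (0 < Rpower (INR N) s) by apply exp_pos. replace (INR N / ln (INR N)) with (Rpower (INR N) a * Rpower (INR N) s / ln (INR N)) by (rewrite H; auto). field. split; lra. }
  rewrite E.
  assert (HNa : Rpower (beta / 2) a * Rpower (ln T) a <= Rpower (INR N) a).
  { rewrite Rpower_mult_distr by lra. apply Rle_Rpower_l. unfold a; lra. split.
    apply Rmult_lt_0_compat; lra. unfold y in Hn2, Hy. lra. }
  assert (HlnN : ln (INR N) <= 2 * u).
  { assert (ln (INR N) <= ln y) by (apply ln_le; lra). unfold y in H. rewrite ln_mult in H by lra.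
    fold u in H. lra. }
  assert (Hu0 : 0 < u) by lra.
  assert (0 < Rpower (ln T) a) by apply exp_pos.
  assert (0 < Rpower (beta/2) a) by apply exp_pos.
  apply (Rle_trans _ (Rpower (INR N) a / (2 * u))).
  - replace (Rpower (beta / 2) a / 2 * (Rpower (ln T) a / u)) with (Rpower (beta / 2) a * Rpower (ln T) a / (2 * u)) by (field; lra).
    apply Rmult_le_compat_r. apply Rlt_le, Rinv_0_lt_compat; lra. auto.
  - apply Rmult_le_compat_l. apply Rlt_le, exp_pos. apply Rinv_le_contravar; lra.
Qed.

Lemma target_lt_big s K : 0 < s < 1 -> exists M, forall T, exp (exp M) <= T ->
  K <= Rpower (ln T) (1 - s) / ln (ln T).
Proof.
  intros Hs. set (a := 1 - s). exists (Rmax 1 (4 * Rabs K / (a * a))). intros T HT.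
  destruct (big_u _ _ HT) as [H1 H2]. set (u := ln (ln T)) in *.
  assert (Hu1 : 1 <= u) by (eapply Rle_trans; [apply Rmax_l| apply H2]).
  assert (Hu2 : 4 * Rabs K / (a * a) <= u) by (eapply Rle_trans; [apply Rmax_r| apply H2]).
  assert (Ha : 0 < a) by (unfold a; lra).
  assert (E : Rpower (ln T) a = exp (a * u)) by reflexivity.
  rewrite E. pose proof (exp_ge_sq (a * u) ltac:(nra)).
  assert (a * a * u / 4 <= exp (a * u) / u). { apply (Rmult_le_reg_r u). lra.
    replace (exp (a * u) / u * u) with (exp (a * u)) by (field; lra). nra. }
  assert (4 * Rabs K / (a * a) * (a*a) = 4 * Rabs K) by (field; lra).
  assert (4 * Rabs K / (a * a) * (a*a) <= u * (a * a)) by (apply Rmult_le_compat_r; nra).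
  pose proof (Rle_abs K). nra.
Qed.

Lemma term1_lower m : (2 <= m)%nat ->
  ln (ln (INR m + 2)) - ln (ln (INR m + 1)) <= gfun m * (fpow 1 m - fpow 1 (S m)).
Proof.
  intros Hm. pose proof (INR2 m Hm) as H2.
  assert (Hl1 : 0 < ln (INR m)) by (apply ln_pos; lra).
  assert (Hl2 : 0 < ln (INR m + 1)) by (apply ln_pos; lra).
  assert (Hl3 : 0 < ln (INR m + 2)) by (apply ln_pos; lra).
  assert (E : gfun m * (fpow 1 m - fpow 1 (S m)) = / ((INR m + 1) * ln (INR m))).
  { unfold gfun, fpow. rewrite S_INR, !Rpower_1 by lra. field. repeat split; lra. }
  rewrite E. rewrite <- ln_div by lra.
  eapply Rle_trans. apply ln_le_sub1. apply Rdiv_lt_0_compat; lra.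
  assert (ln (INR m + 2) - ln (INR m + 1) <= / (INR m + 1)).
  { rewrite <- ln_div by lra. eapply Rle_trans. apply ln_le_sub1. apply Rdiv_lt_0_compat; lra.
    apply Req_le. field. lra. }
  assert (ln (INR m) <= ln (INR m + 1)) by (apply ln_le; lra).
  replace (ln (INR m + 2) / ln (INR m + 1) - 1) with ((ln (INR m + 2) - ln (INR m + 1)) / ln (INR m + 1)) by (field; lra).
  apply (Rle_trans _ (/ (INR m + 1) / ln (INR m + 1))).
  apply Rmult_le_compat_r. apply Rlt_le, Rinv_0_lt_compat; lra. auto.
  unfold Rdiv. rewrite Rinv_mult. apply Rmult_le_compat_l. apply Rlt_le, Rinv_0_lt_compat; lra.
  apply Rinv_le_contravar; lra.
Qed.

Lemma rs1_lower N : (2 <= N)%nat ->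
  ln (ln (INR N + 1)) - ln (ln 3) <= rs (fun m => if Nat.leb 2 m then gfun m * (fpow 1 m - fpow 1 (S m)) else 0) N.
Proof.
  intros HN. induction HN.
  - replace (INR 2 + 1) with 3 by (simpl; lra). apply Rle_trans with 0. lra.
    apply rs_nonneg. intros m Hm. destruct (Nat.leb_spec 2 m). lia. lra.
  - cbn [rs]. replace (Nat.leb 2 m) with true by (symmetry; apply Nat.leb_le; auto).
    pose proof (term1_lower m HN). rewrite S_INR.
    replace (INR m + 1 + 1) with (INR m + 2) by ring. lra.
Qed.

Lemma psi_lower_1 beta : 0 < beta ->
  exists M, forall T, exp (exp M) <= T ->
   / 2 * ln (ln (ln T)) <= Psi 1 (Defs.nfloor (beta * ln T)) /\
   (2 <= Defs.nfloor (beta * ln T))%nat.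
Proof.
  intros Hb.
  exists (Rmax (exp 4) (Rmax (4 / beta) (- 2 * ln beta))). intros T HT.
  destruct (big_u _ _ HT) as [H1 H2]. set (u := ln (ln T)) in *.
  assert (Hu1 : exp 4 <= u) by (eapply Rle_trans; [apply Rmax_l| apply H2]).
  assert (Hu2 : 4 / beta <= u) by (eapply Rle_trans; [eapply Rle_trans; [apply Rmax_l|apply Rmax_r]| apply H2]).
  assert (Hu3 : - 2 * ln beta <= u) by (eapply Rle_trans; [eapply Rle_trans; [apply Rmax_r|apply Rmax_r]| apply H2]).
  assert (He4 : 1 <= exp 4) by (pose proof (exp_ineq1_le 4); lra).
  assert (HlT : u + 1 <= ln T). { assert (exp u = ln T). unfold u. apply exp_ln. eapply Rlt_le_trans; [apply exp_pos| apply H1].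
     pose proof (exp_ineq1_le u). lra. }
  set (y := beta * ln T).
  assert (Hy : 4 <= y). { unfold y. assert (4 / beta * beta = 4) by (field; lra).
     assert (4 / beta * beta <= ln T * beta) by (apply Rmult_le_compat_r; lra). nra. }
  destruct (nfloor_bounds y ltac:(lra)) as [Hn1 Hn2]. set (N := Defs.nfloor y) in *.
  assert (HN2 : (2 <= N)%nat). { assert (INR 1 < INR N) by (simpl; lra). apply INR_lt in H. lia. }
  split; auto.
  unfold Psi. assert (0 <= gfun N * fpow 1 N). { pose proof (gfun_pos N HN2). pose proof (fpow_pos 1 N). nra. }
  pose proof (rs1_lower N HN2).
  assert (Hl3 : ln (ln 3) <= 1).
  { assert (0 < ln 3) by (apply ln_pos; lra). eapply Rle_trans. apply ln_le_sub1; auto.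
    pose proof (ln_le_sub1 3 ltac:(lra)). lra. }
  assert (Hly : u / 2 <= ln y). { unfold y. rewrite ln_mult by lra. fold u. lra. }
  assert (Hln : ln y <= ln (INR N + 1)) by (apply ln_le; lra).
  assert (Hu0 : 0 < u) by (pose proof (exp_pos 4); lra).
  assert (ln (u / 2) <= ln (ln (INR N + 1))) by (apply ln_le; lra).
  rewrite ln_div in H3 by lra.
  assert (ln 2 <= 1) by (pose proof (ln_le_sub1 2 ltac:(lra)); lra).
  assert (4 <= ln u). { rewrite <- (ln_exp 4). apply ln_le. apply exp_pos. auto. }
  lra.
Qed.

Lemma target_1_big K : exists M, forall T, exp (exp M) <= T -> K <= ln (ln (ln T)).
Proof.
  exists (exp K). intros T HT. destruct (big_u _ _ HT) as [H1 H2].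
  rewrite <- (ln_exp K). apply ln_le. apply exp_pos. auto.
Qed.


Fixpoint rsum1 (F : nat -> R) (N : nat) : R :=
  match N with O => 0 | S n => rsum1 F n + F (S n) end.

Lemma rsum1_le F G N : (forall g, (1 <= g <= N)%nat -> F g <= G g) -> rsum1 F N <= rsum1 G N.
Proof. induction N; intros H; simpl. lra. pose proof (IHN (fun g Hg => H g ltac:(lia))). pose proof (H (S N) ltac:(lia)). lra. Qed.

Lemma rsum1_ext F G N : (forall g, (1 <= g <= N)%nat -> F g = G g) -> rsum1 F N = rsum1 G N.
Proof. induction N; intros H; simpl. lra. rewrite (IHN (fun g Hg => H g ltac:(lia))), (H (S N) ltac:(lia)). auto. Qed.

Lemma rsum1_abs F N : Rabs (rsum1 F N) <= rsum1 (fun g => Rabs (F g)) N.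
Proof. induction N; simpl. rewrite Rabs_R0; lra. eapply Rle_trans. apply Rabs_triang. lra. Qed.

Lemma rsum1_scal c F N : rsum1 (fun g => c * F g) N = c * rsum1 F N.
Proof. induction N; simpl. lra. rewrite IHN. lra. Qed.

Lemma rsum1_const_bound F N D : (forall g, (1 <= g <= N)%nat -> F g <= D) -> rsum1 F N <= INR N * D.
Proof. induction N; intros H. simpl. lra. cbn [rsum1]. rewrite S_INR. pose proof (IHN (fun g Hg => H g ltac:(lia))). pose proof (H (S N) ltac:(lia)). lra. Qed.

Lemma rsum1_zero F N : (forall g, (1 <= g <= N)%nat -> F g = 0) -> rsum1 F N = 0.
Proof. induction N; intros H; simpl. lra. rewrite (IHN (fun g Hg => H g ltac:(lia))), (H (S N) ltac:(lia)). lra. Qed.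

Lemma rsum1_single F N h : (1 <= h <= N)%nat -> (forall g, (1 <= g <= N)%nat -> g <> h -> F g = 0) -> rsum1 F N = F h.
Proof.
  induction N; intros Hh H. lia. simpl. destruct (Nat.eq_dec h (S N)).
  - subst. rewrite rsum1_zero. lra. intros g Hg. apply H; lia.
  - rewrite IHN. rewrite (H (S N)) by lia. lra. lia. intros; apply H; lia.
Qed.

Lemma Re_cpsum f N : Re (cpsum f N) = rpsum (fun p => Re (f p)) N.
Proof. induction N. reflexivity. cbn [cpsum rpsum]. rewrite <- IHN. destruct (prime.prime (S N)); destruct (cpsum f N), (f (S N)); simpl; ring. Qed.

Lemma Re_lin c z k : Re (Cminus (Cmult (RtoC c) z) k) = c * Re z - Re k.
Proof. destruct z, k. simpl. ring. Qed.

Lemma Re_conj_scal c R z : Re (Cmult (Cconj (Cmult (RtoC c) R)) z) = c * Re (Cmult (Cconj R) z).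
Proof. destruct R, z. simpl. ring. Qed.

Lemma Re_conj_plus u v z : Re (Cmult (Cconj (Cplus u v)) z) = Re (Cmult (Cconj u) z) + Re (Cmult (Cconj v) z).
Proof. destruct u, v, z. simpl. ring. Qed.

Lemma Re_conj_opp u z : Re (Cmult (Cconj (Copp u)) z) = - Re (Cmult (Cconj u) z).
Proof. destruct u, z. simpl. ring. Qed.

Lemma Re_conj_comm u z : Re (Cmult (Cconj u) z) = Re (Cmult z (Cconj u)).
Proof. destruct u, z. simpl. ring. Qed.

Lemma Re_conj_0 z : Re (Cmult (Cconj (RtoC 0)) z) = 0.
Proof. destruct z. simpl. ring. Qed.

Lemma Re_conj_bound u z : Rabs (Re (Cmult (Cconj u) z)) <= Cmod u * Cmod z.
Proof. eapply Rle_trans. apply re_le_Cmod. rewrite Cmod_mult, Cmod_conj. lra. Qed.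

Lemma Cmod_sq_Re u : Cmod u ^ 2 = Re (Cmult u (Cconj u)).
Proof. rewrite <- Cmod2_conj. simpl. reflexivity. Qed.

Definition sg (H g : nat) : R := if Nat.leb g H then 1 else -1.

Lemma Re_conj_csum1 H a N z :
  Re (Cmult (Cconj (csum1 (fun g => if Nat.leb g H then a g else Copp (a g)) N)) z) =
  rsum1 (fun g => sg H g * Re (Cmult (Cconj (a g)) z)) N.
Proof.
  induction N. apply Re_conj_0. cbn [csum1 rsum1]. rewrite Re_conj_plus, IHN. f_equal.
  unfold sg. destruct (Nat.leb (S N) H). ring. rewrite Re_conj_opp. ring.
Qed.

Lemma Cmod_csum1 H a N :
  Cmod (csum1 (fun g => if Nat.leb g H then a g else Copp (a g)) N) <= rsum1 (fun g => Cmod (a g)) N.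
Proof.
  induction N. simpl. rewrite Cmod_0. lra. cbn [csum1 rsum1]. eapply Rle_trans. apply Cmod_triangle.
  destruct (Nat.leb (S N) H). lra. rewrite Cmod_opp. lra.
Qed.

Lemma density_corr a b k : prime_corr_limit a b k -> density (fun p => Re (Cmult (a p) (Cconj (b p)))) (Re k).
Proof.
  intros Hl e He. destruct (Hl e He) as [X HX]. exists X. intros x Hx.
  specialize (HX x Hx). eapply Rle_lt_trans; [|apply HX].
  unfold rprimesum, cprimesum. rewrite <- Re_cpsum. rewrite <- Re_lin. apply re_le_Cmod.
Qed.

Lemma density_ext b b' k : (forall p, prime.prime p = true -> b p = b' p) -> density b k -> density b' k.
Proof.
  intros E Hd e He. destruct (Hd e He) as [X HX]. exists X. intros x Hx.
  unfold rprimesum. rewrite <- (rpsum_ext b b') by auto. apply HX; auto.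
Qed.

Lemma density_plus b1 b2 k1 k2 : density b1 k1 -> density b2 k2 -> density (fun p => b1 p + b2 p) (k1 + k2).
Proof.
  intros H1 H2 e He. destruct (H1 (e/2) ltac:(lra)) as [X1 HX1]. destruct (H2 (e/2) ltac:(lra)) as [X2 HX2].
  exists (Rmax X1 X2). intros x Hx. unfold rprimesum in *. rewrite rpsum_plus.
  specialize (HX1 x (Rle_trans _ _ _ (Rmax_l _ _) Hx)). specialize (HX2 x (Rle_trans _ _ _ (Rmax_r _ _) Hx)).
  replace (ln x / x * (rpsum b1 (Defs.nfloor x) + rpsum b2 (Defs.nfloor x)) - (k1 + k2)) with
    ((ln x / x * rpsum b1 (Defs.nfloor x) - k1) + (ln x / x * rpsum b2 (Defs.nfloor x) - k2)) by ring.
  eapply Rle_lt_trans. apply Rabs_triang. lra.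
Qed.

Lemma density_scal c b k : density b k -> density (fun p => c * b p) (c * k).
Proof.
  intros H e He. destruct (H (e / (Rabs c + 1))) as [X HX].
  { apply Rdiv_lt_0_compat; auto. pose proof (Rabs_pos c). lra. }
  exists X. intros x Hx. unfold rprimesum in *. rewrite rpsum_scal. specialize (HX x Hx).
  replace (ln x / x * (c * rpsum b (Defs.nfloor x)) - c * k) with (c * (ln x / x * rpsum b (Defs.nfloor x) - k)) by ring.
  rewrite Rabs_mult. pose proof (Rabs_pos c).
  apply Rle_lt_trans with ((Rabs c + 1) * Rabs (ln x / x * rpsum b (Defs.nfloor x) - k)).
  pose proof (Rabs_pos (ln x / x * rpsum b (Defs.nfloor x) - k)). nra.
  apply (Rmult_lt_compat_l (Rabs c + 1)) in HX; [|lra].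
  replace ((Rabs c + 1) * (e / (Rabs c + 1))) with e in HX by (field; lra). lra.
Qed.

Lemma density_zero : density (fun _ => 0) 0.
Proof.
  intros e He. exists 0. intros x Hx. unfold rprimesum.
  assert (Z : forall N, rpsum (fun _ => 0) N = 0).
  { induction N; simpl. lra. rewrite IHN. destruct (prime.prime (S N)); lra. }
  rewrite Z, Rmult_0_r, Rminus_0_r, Rabs_R0; auto.
Qed.

Lemma density_rsum1 (F : nat -> nat -> R) (k : nat -> R) N :
  (forall g, (1 <= g <= N)%nat -> density (F g) (k g)) ->
  density (fun p => rsum1 (fun g => F g p) N) (rsum1 k N).
Proof.
  induction N; intros H; simpl. apply density_zero.
  apply density_plus. apply IHN. intros; apply H; lia. apply H; lia.
Qed.

Lemma fin_max (F : nat -> R) N : exists M, forall h, (1 <= h <= N)%nat -> F h <= M.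
Proof.
  induction N. exists 0. intros; lia. destruct IHN as [M HM]. exists (Rmax M (F (S N))).
  intros h Hh. destruct (Nat.eq_dec h (S N)). subst. apply Rmax_r.
  eapply Rle_trans. apply HM; lia. apply Rmax_l.
Qed.

Lemma fin_unif (P : nat -> R -> Prop) N :
  (forall h, (1 <= h <= N)%nat -> exists T0, forall T, T0 <= T -> P h T) ->
  exists T0, forall T, T0 <= T -> forall h, (1 <= h <= N)%nat -> P h T.
Proof.
  induction N; intros H. exists 0. intros; lia.
  destruct IHN as [T1 H1]. intros; apply H; lia.
  destruct (H (S N) ltac:(lia)) as [T2 H2]. exists (Rmax T1 T2). intros T HT h Hh.
  pose proof (Rmax_l T1 T2). pose proof (Rmax_r T1 T2).
  destruct (Nat.eq_dec h (S N)). subst. apply H2. lra.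
  apply H1. lra. lia.
Qed.

Lemma fin_D (a : nat -> nat -> C) N :
  (forall g, (1 <= g <= N)%nat -> exists D, 0 <= D /\ forall p, prime.prime p = true -> Cmod (a g p) <= D) ->
  exists D, 0 <= D /\ forall g, (1 <= g <= N)%nat -> forall p, prime.prime p = true -> Cmod (a g p) <= D.
Proof.
  induction N; intros H. exists 0. split. lra. intros; lia.
  destruct IHN as [D1 [HD1 H1]]. intros; apply H; lia.
  destruct (H (S N) ltac:(lia)) as [D2 [HD2 H2]]. exists (Rmax D1 D2). split.
  eapply Rle_trans; [apply HD1| apply Rmax_l].
  intros g Hg p Hp. destruct (Nat.eq_dec g (S N)). subst. eapply Rle_trans. apply H2; auto. apply Rmax_r.
  eapply Rle_trans. apply H1; auto; lia. apply Rmax_l.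
Qed.

Lemma real_bound C P m d Q b0 : 0 < C -> 0 < P -> 0 <= m <= d -> Rabs Q <= b0 ->
  - (Q / C) / ((1 + m) * P) <= / C * (- Q + d * b0) * / P.
Proof.
  intros HC HP Hm HQ.
  assert (E : - (Q / C) / ((1 + m) * P) = / C * (- Q / (1 + m)) * / P) by (field; lra).
  rewrite E. apply Rmult_le_compat_r. apply Rlt_le, Rinv_0_lt_compat; auto.
  apply Rmult_le_compat_l. apply Rlt_le, Rinv_0_lt_compat; auto.
  assert (E2 : - Q / (1 + m) = - Q + Q * (m / (1 + m))) by (field; lra). rewrite E2.
  apply Rplus_le_compat_l.
  assert (0 <= m / (1 + m) <= d). { split. apply Rdiv_le_0_compat; lra.
    apply (Rmult_le_reg_r (1 + m)). lra. unfold Rdiv. rewrite Rmult_assoc, Rinv_l by lra. nra. }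
  pose proof (Rle_abs Q). pose proof (Rabs_pos Q). nra.
Qed.

Lemma rpsum_le_range F G N : (forall m, prime.prime m = true -> (m <= N)%nat -> F m <= G m) -> rpsum F N <= rpsum G N.
Proof. intros H. induction N; simpl. lra. destruct (prime.prime (S N)) eqn:E.
  pose proof (H _ E (le_n _)). pose proof (IHN (fun m Hm Hl => H m Hm ltac:(lia))). lra.
  pose proof (IHN (fun m Hm Hl => H m Hm ltac:(lia))). lra. Qed.

Lemma rpsum_tail F M N : (forall m, prime.prime m = true -> 0 <= F m) -> (forall m, (M <= m)%nat -> F m = 0) ->
  rpsum F N <= rpsum F M.
Proof.
  intros H0 HZ. destruct (Nat.le_gt_cases N M). apply rpsum_mono; auto.
  induction H. simpl. rewrite HZ by lia. destruct (prime.prime (S M)); lra.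
  simpl. rewrite HZ by lia. destruct (prime.prime (S m)); lra.
Qed.



Definition NN (H G : nat) := (H + G)%nat.
Definition Qh (H G : nat) (a : nat -> nat -> C) (h p : nat) : R := rsum1 (fun g => sg H h * sg H g * Re (Cmult (Cconj (a g p)) (a h p))) (NN H G).
Definition b0 (H G : nat) (a : nat -> nat -> C) (h p : nat) : R := rsum1 (fun g => (Cmod (a g p) ^ 2 + Cmod (a h p) ^ 2) / 2) (NN H G).
Definition kb0 (H G : nat) (kappa : nat -> nat -> C) (h : nat) : R := rsum1 (fun g => (Re (kappa g g) + Re (kappa h h)) / 2) (NN H G).
Definition Rsum (H G : nat) (a : nat -> nat -> C) (p : nat) : C := csum1 (fun g => if Nat.leb g H then a g p else Copp (a g p)) (NN H G).

Lemma sg_sq (H : nat) h : sg H h * sg H h = 1.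
Proof. unfold sg. destruct (Nat.leb h H); lra. Qed.

Lemma dens_Q (H G : nat) (a kappa : nat -> nat -> C) h :
  (forall h g, (1 <= h <= (NN H G))%nat -> (1 <= g <= (NN H G))%nat -> prime_corr_limit (a h) (a g) (kappa h g)) ->
  (forall h g, (1 <= h <= (NN H G))%nat -> (1 <= g <= (NN H G))%nat -> h <> g -> kappa h g = RtoC 0) ->
  (1 <= h <= (NN H G))%nat -> density (Qh H G a h) (Re (kappa h h)).
Proof.
  intros Hc Hz Hh.
  replace (Re (kappa h h)) with (rsum1 (fun g => sg H h * sg H g * Re (kappa h g)) (NN H G)).
  - apply density_rsum1. intros g Hg. apply density_scal.
    eapply density_ext; [| apply density_corr, (Hc h g Hh Hg)].
    intros p _. cbv beta. rewrite Re_conj_comm. reflexivity.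
  - rewrite (rsum1_single _ _ h Hh). rewrite (sg_sq H). ring.
    intros g Hg Hne. rewrite Hz; auto. simpl. ring.
Qed.

Lemma dens_b0 (H G : nat) (a kappa : nat -> nat -> C) h :
  (forall h g, (1 <= h <= (NN H G))%nat -> (1 <= g <= (NN H G))%nat -> prime_corr_limit (a h) (a g) (kappa h g)) ->
  (1 <= h <= (NN H G))%nat -> density (b0 H G a h) (kb0 H G kappa h).
Proof.
  intros Hc Hh. apply density_rsum1. intros g Hg.
  replace ((Re (kappa g g) + Re (kappa h h)) / 2) with (/2 * (Re (kappa g g) + Re (kappa h h))) by field.
  eapply density_ext; [| apply density_scal, density_plus; apply density_corr; [apply (Hc g g Hg Hg)| apply (Hc h h Hh Hh)]].
  intros p _. cbv beta. rewrite !Cmod_sq_Re. field.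
Qed.

Lemma Q_bound (H G : nat) (a : nat -> nat -> C) h p : Rabs (Qh H G a h p) <= b0 H G a h p.
Proof.
  unfold Qh, b0. eapply Rle_trans. apply rsum1_abs. apply rsum1_le. intros g Hg.
  rewrite Rabs_mult. replace (Rabs (sg H h * sg H g)) with 1.
  2:{ unfold sg. destruct (Nat.leb h H), (Nat.leb g H); unfold Rabs; destruct (Rcase_abs _); lra. }
  rewrite Rmult_1_l. eapply Rle_trans. apply Re_conj_bound.
  pose proof (Cmod_ge_0 (a g p)). pose proof (Cmod_ge_0 (a h p)).
  assert (0 <= (Cmod (a g p) - Cmod (a h p))^2) by apply pow2_ge_0. simpl. nra.
Qed.

Lemma b0_nonneg (H G : nat) (a : nat -> nat -> C) h p : 0 <= b0 H G a h p.
Proof. pose proof (Q_bound H G a h p). pose proof (Rabs_pos (Qh H G a h p)). lra. Qed.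

Lemma per_prime (H G : nat) (a : nat -> nat -> C) h Cc xe beta T s D p :
  1 <= Cc -> 0 <= D -> (forall g, (1 <= g <= (NN H G))%nat -> Cmod (a g p) <= D) ->
  (1 <= p)%nat -> INR p <= beta * ln T ->
  let phi := / Cc * (- Qh H G a h p + (INR (NN H G) * D / Cc) ^ 2 * b0 H G a h p) * fpow s p in
  jsign H h * (let r := rcoef H G a Cc xe beta T p in
       Re (Cmult (Cconj r) (a h p)) / ((1 + (Cmod r) ^ 2) * Rpower (INR p) s))
   <= phi + (if Rle_dec xe (INR p) then 0 else Rabs phi).
Proof.
  intros HC HD Hb Hp1 Hpy phi. cbv zeta. unfold rcoef.
  destruct (Rle_dec xe (INR p)) as [Hx|Hx].
  2:{ rewrite Re_conj_0. unfold Rdiv. rewrite Rmult_0_l, Rmult_0_r. pose proof (Rle_abs (- phi)) as Hq. rewrite Rabs_Ropp in Hq. lra. }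
  destruct (Rle_dec (INR p) (beta * ln T)) as [_|Hy]; [|contradiction].
  rewrite Rplus_0_r. change (H + G)%nat with (NN H G).
  set (m := Cmod (Cmult (RtoC (/ Cc)) (csum1 (fun g => if Nat.leb g H then a g p else Copp (a g p)) (NN H G))) ^ 2).
  assert (Hm : 0 <= m) by apply pow2_ge_0.
  assert (HP : 0 < Rpower (INR p) s) by apply exp_pos.
  rewrite Re_conj_scal. unfold Rsum. rewrite Re_conj_csum1.
  replace (jsign H h * (/ Cc * rsum1 (fun g => sg H g * Re (Cmult (Cconj (a g p)) (a h p))) (NN H G) /
     ((1 + m) * Rpower (INR p) s)))
   with (- (Qh H G a h p / Cc) / ((1 + m) * Rpower (INR p) s)).
  2:{ unfold Qh. rewrite <- (rsum1_ext (fun g => sg H h * (sg H g * Re (Cmult (Cconj (a g p)) (a h p))))) by (intros; ring).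
      rewrite rsum1_scal. unfold jsign, sg. destruct (Nat.leb h H); field; repeat split; apply Rgt_not_eq; lra. }
  unfold phi, fpow. apply real_bound. lra. apply exp_pos. 2: apply (Q_bound H G a).
  split. apply pow2_ge_0. unfold m.
  rewrite Cmod_mult, Cmod_R, Rabs_pos_eq by (apply Rlt_le, Rinv_0_lt_compat; lra).
  assert (Cmod (csum1 (fun g => if Nat.leb g H then a g p else Copp (a g p)) (NN H G)) <= INR (NN H G) * D).
  { eapply Rle_trans. apply Cmod_csum1. apply rsum1_const_bound. auto. }
  assert (0 <= Cmod (csum1 (fun g => if Nat.leb g H then a g p else Copp (a g p)) (NN H G))) by apply Cmod_ge_0.
  assert (0 < / Cc) by (apply Rinv_0_lt_compat; lra).
  replace (INR (NN H G) * D / Cc) with (/ Cc * (INR (NN H G) * D)) by (field; lra).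
  apply pow_incr. split. nra. apply Rmult_le_compat_l; lra.
Qed.



Lemma arith_final iC Ps d LQ Lb k c1 c2 A :
  0 < iC -> 0 <= Ps -> 0 <= d -> (3/4) * k * Ps - c1 <= LQ -> Lb <= A * Ps + c2 -> d * A <= k / 4 ->
  - iC * LQ + iC * d * Lb <= - (k / 2) * iC * Ps + iC * (c1 + d * c2).
Proof.
  intros HiC HPs Hd HLQ HLb HdA.
  assert (iC * LQ >= iC * ((3/4) * k * Ps - c1)) by (apply Rle_ge, Rmult_le_compat_l; lra).
  assert (d * Lb <= d * (A * Ps + c2)) by (apply Rmult_le_compat_l; lra).
  assert (iC * (d * Lb) <= iC * (d * (A * Ps + c2))) by (apply Rmult_le_compat_l; lra).
  assert (d * A * Ps <= k / 4 * Ps) by (apply Rmult_le_compat_r; lra).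
  assert (iC * (d * A * Ps) <= iC * (k / 4 * Ps)) by (apply Rmult_le_compat_l; lra).
  nra.
Qed.

Lemma per_h H G a kappa h Cc xe beta s D :
  (forall h g, (1 <= h <= NN H G)%nat -> (1 <= g <= NN H G)%nat -> prime_corr_limit (a h) (a g) (kappa h g)) ->
  (forall h g, (1 <= h <= NN H G)%nat -> (1 <= g <= NN H G)%nat -> h <> g -> kappa h g = RtoC 0) ->
  (1 <= h <= NN H G)%nat -> 0 < Re (kappa h h) -> 0 < s ->
  1 <= Cc -> 0 <= D ->
  (forall g, (1 <= g <= NN H G)%nat -> forall p, prime.prime p = true -> Cmod (a g p) <= D) ->
  (INR (NN H G) * D / Cc) ^ 2 * (Rabs (kb0 H G kappa h) + 1) <= Re (kappa h h) / 4 ->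
  exists K (n0 : nat), forall T, (n0 <= Defs.nfloor (beta * ln T))%nat -> (2 <= Defs.nfloor (beta * ln T))%nat ->
    jsign H h * Ssum H G a Cc xe beta T h s <=
      - (Re (kappa h h) / 2) * / Cc * Psi s (Defs.nfloor (beta * ln T)) + K.
Proof.
  intros Hc Hz Hh Hk Hs HC HD HDb Hsmall.
  set (k := Re (kappa h h)) in *.
  set (d := (INR (NN H G) * D / Cc) ^ 2) in *.
  assert (Hd : 0 <= d) by apply pow2_ge_0.
  destruct (key_lemma s _ _ Hs (dens_Q H G a kappa h Hc Hz Hh) (k / 4) ltac:(lra)) as [c1 [N1 HN1]].
  destruct (key_lemma s _ _ Hs (dens_b0 H G a kappa h Hc Hh) 1 ltac:(lra)) as [c2 [N2 HN2]].
  destruct (nat_above xe) as [Mx [HMx _]].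
  set (phi := fun p => / Cc * (- Qh H G a h p + d * b0 H G a h p) * fpow s p).
  set (psi := fun p => if Rle_dec xe (INR p) then 0 else Rabs (phi p)).
  exists (/ Cc * (c1 + d * c2) + rpsum psi Mx), (Nat.max N1 N2).
  intros T HT HT2. set (Nn := Defs.nfloor (beta * ln T)) in *.
  assert (HPs : 0 <= Psi s Nn).
  { eapply Rle_trans; [| apply Psi_nonneg; auto; lra]. pose proof (gfun_pos Nn HT2). pose proof (fpow_pos s Nn). nra. }
  unfold Ssum, rprimesum. fold Nn.
  rewrite <- rpsum_scal.
  eapply Rle_trans.
  { apply (rpsum_le_range _ (fun p => phi p + psi p)). intros p Hp HpN.
    pose proof (prime_ge2 p Hp).
    apply (per_prime H G a h Cc xe beta T s D p HC HD). intros g Hg; apply HDb; auto. lia.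
    apply nfloor_le; auto. lia. }
  rewrite rpsum_plus.
  assert (Hpsi : rpsum psi Nn <= rpsum psi Mx).
  { apply rpsum_tail. intros m _. unfold psi. destruct (Rle_dec xe (INR m)). lra. apply Rabs_pos.
    intros m Hm. unfold psi. destruct (Rle_dec xe (INR m)) as [|n]. auto. exfalso. apply n.
    eapply Rle_trans. apply HMx. apply le_INR. auto. }
  assert (Hphi : rpsum phi Nn = - / Cc * rpsum (fun p => Qh H G a h p * fpow s p) Nn +
                                 / Cc * d * rpsum (fun p => b0 H G a h p * fpow s p) Nn).
  { rewrite <- !rpsum_scal, <- rpsum_plus. apply rpsum_ext. intros. unfold phi. ring. }
  specialize (HN1 Nn ltac:(lia)). specialize (HN2 Nn ltac:(lia)).
  change (Re (kappa h h)) with k in HN1.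
  set (x1 := rpsum (fun p => Qh H G a h p * fpow s p) Nn - k * Psi s Nn) in HN1.
  set (x2 := rpsum (fun p => b0 H G a h p * fpow s p) Nn - kb0 H G kappa h * Psi s Nn) in HN2.
  pose proof (Rle_abs x1). pose proof (Rle_abs (- x1)). rewrite Rabs_Ropp in *.
  pose proof (Rle_abs x2). pose proof (Rle_abs (- x2)). rewrite Rabs_Ropp in *. unfold x1, x2 in *.
  assert (HH1 : 3 / 4 * k * Psi s Nn - c1 <= rpsum (fun p => Qh H G a h p * fpow s p) Nn)  by lra.
  assert (HH2 : rpsum (fun p => b0 H G a h p * fpow s p) Nn <= (Rabs (kb0 H G kappa h) + 1) * Psi s Nn + c2).
  { pose proof (Rle_abs (kb0 H G kappa h)). nra. }
  pose proof (arith_final (/ Cc) (Psi s Nn) d _ _ k c1 c2 _ ltac:(apply Rinv_0_lt_compat; lra) HPs Hd HH1 HH2 ltac:(lra)).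
  rewrite Hphi.
  replace (- / Cc) with (- (/ Cc)) by ring. lra.
Qed.


Lemma ee_mono M1 M2 : M1 <= M2 -> exp (exp M1) <= exp (exp M2).
Proof.
  intros H. destruct (Rle_lt_or_eq_dec _ _ H) as [Hl|He].
  apply Rlt_le, exp_increasing, exp_increasing; auto. subst; lra.
Qed.

Lemma nn_big beta n : 0 < beta -> exists M, forall T, exp (exp M) <= T -> (n <= Defs.nfloor (beta * ln T))%nat.
Proof.
  intros Hb. exists ((INR n + 1) / beta). intros T HT. destruct (big_u _ _ HT) as [H1 _].
  pose proof (exp_ineq1_le ((INR n + 1) / beta)).
  assert (HM : INR n + 1 <= beta * ln T).
  { assert ((INR n + 1) / beta <= ln T) by lra.
    apply (Rmult_le_compat_l beta) in H0; [|lra]. replace (beta * ((INR n + 1) / beta)) with (INR n + 1) in H0 by (field; lra). lra. }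
  pose proof (pos_INR n).
  destruct (nfloor_bounds (beta * ln T) ltac:(lra)) as [_ H2].
  assert (INR n < INR (Defs.nfloor (beta * ln T))) by lra. apply INR_lt in H3. lia.
Qed.

Lemma small_lemma C k A Y : 1 <= C -> 0 < k -> 0 <= A -> 4 * (Y ^ 2) * A / k <= C -> (Y / C) ^ 2 * A <= k / 4.
Proof.
  intros HC Hk HA HY.
  assert (E : (Y / C) ^ 2 * A = (Y ^ 2 * A) / C / C) by (field; lra). rewrite E.
  assert (0 <= Y ^ 2 * A) by (apply Rmult_le_pos; [apply pow2_ge_0| lra]).
  assert (Y ^ 2 * A <= k / 4 * C).
  { apply (Rmult_le_compat_r (k / 4)) in HY; [|lra]. replace (4 * Y ^ 2 * A / k * (k / 4)) with (Y ^ 2 * A) in HY by (field; lra). lra. }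
  apply (Rle_trans _ (Y ^ 2 * A / C)).
  - unfold Rdiv at 1. rewrite <- (Rmult_1_r (Y ^ 2 * A / C)) at 2. apply Rmult_le_compat_l.
    apply Rdiv_le_0_compat; lra. rewrite <- Rinv_1. apply Rinv_le_contravar; lra.
  - apply (Rmult_le_reg_r C). lra. replace (Y ^ 2 * A / C * C) with (Y ^ 2 * A) by (field; lra). lra.
Qed.

Lemma comb Cc k c t Ps K : 0 < Cc -> 0 < k -> 0 < c -> c * t <= Ps -> 4 * Cc * K / (k * c) <= t ->
  - (k / 2) * / Cc * Ps + K <= - (k * c / (4 * Cc)) * t.
Proof.
  intros HC Hk Hc HP Ht.
  assert (HK : K <= k * c / (4 * Cc) * t).
  { apply (Rmult_le_compat_l (k * c / (4 * Cc))) in Ht.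
    replace (k * c / (4 * Cc) * (4 * Cc * K / (k * c))) with K in Ht by (field; lra). auto.
    apply Rlt_le. apply Rdiv_lt_0_compat; nra. }
  assert (H1 : k / 2 * / Cc * (c * t) <= k / 2 * / Cc * Ps).
  { apply Rmult_le_compat_l; auto. apply Rlt_le. apply Rmult_lt_0_compat. lra. apply Rinv_0_lt_compat; lra. }
  replace (k / 2 * / Cc * (c * t)) with (2 * (k * c / (4 * Cc) * t)) in H1 by (field; lra).
  lra.
Qed.

Theorem lemma9 (H G : nat) (a : nat -> nat -> C) (kappa : nat -> nat -> C) :
  (forall h, (1 <= h <= H + G)%nat -> Spoly_arith (a h) /\ Ramanujan (a h)) ->
  (forall h g, (1 <= h <= H + G)%nat -> (1 <= g <= H + G)%nat ->
     prime_corr_limit (a h) (a g) (kappa h g)) ->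
  (forall h, (1 <= h <= H + G)%nat -> 0 < Re (kappa h h)) ->
  (forall h g, (1 <= h <= H + G)%nat -> (1 <= g <= H + G)%nat -> h <> g ->
     kappa h g = RtoC 0) ->
  forall alpha beta : R, 0 < alpha < 1 -> 0 < beta < alpha / 2 ->
  exists eps0 C0 : R, 0 < eps0 /\
  forall eps Cc xe : R, 0 < eps < eps0 -> C0 <= Cc ->
    good_xeps H G a kappa eps xe ->
  forall sigma : R, 0 < sigma <= 1 ->
  exists B : nat -> R, (forall h, (1 <= h <= H + G)%nat -> 0 < B h) /\
  exists T0 : R, forall T : R, T0 <= T ->
  forall h, (1 <= h <= H + G)%nat ->
    jsign H h * Ssum H G a Cc xe beta T h sigma <=
      (if Rlt_dec sigma 1
       then - B h * (Rpower (ln T) (1 - sigma) / ln (ln T))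
       else - B h * ln (ln (ln T))).
Proof.
  intros Hsp Hcorr Hpos Hoff alpha beta Halpha Hbeta.
  change (H + G)%nat with (NN H G) in *.
  destruct (fin_D a (NN H G)) as [D [HD HDb]].
  { intros g Hg. destruct (Hsp g Hg). apply a_bounded; auto. }
  destruct (fin_max (fun h => 4 * ((INR (NN H G) * D) ^ 2) * (Rabs (kb0 H G kappa h) + 1) / Re (kappa h h)) (NN H G)) as [M HM].
  exists 1, (Rmax 1 M). split. lra.
  intros eps Cc xe Heps HC _ sigma Hsig.
  assert (HC1 : 1 <= Cc) by (eapply Rle_trans; [apply Rmax_l| apply HC]).
  assert (Hsmall : forall h, (1 <= h <= NN H G)%nat ->
     (INR (NN H G) * D / Cc) ^ 2 * (Rabs (kb0 H G kappa h) + 1) <= Re (kappa h h) / 4).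
  { intros h Hh. apply small_lemma. auto. apply Hpos; auto. pose proof (Rabs_pos (kb0 H G kappa h)). lra.
    eapply Rle_trans. apply (HM h Hh). eapply Rle_trans. apply Rmax_r. apply HC. }
  destruct (Rlt_dec sigma 1) as [Hlt|Hge].
  - destruct (psi_lower_lt sigma beta ltac:(lra) ltac:(lra)) as [c [Hc [M1 HM1]]].
    exists (fun h => Re (kappa h h) * c / (4 * Cc)). split.
    { intros h Hh. apply Rdiv_lt_0_compat. apply Rmult_lt_0_compat; auto. lra. }
    apply (fin_unif (fun h T => jsign H h * Ssum H G a Cc xe beta T h sigma <=
        - (Re (kappa h h) * c / (4 * Cc)) * (Rpower (ln T) (1 - sigma) / ln (ln T)))).
    intros h Hh.
    destruct (per_h H G a kappa h Cc xe beta sigma D Hcorr Hoff Hh (Hpos h Hh) ltac:(lra) HC1 HD HDb (Hsmall h Hh)) as [K [n0 HK]].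
    destruct (target_lt_big sigma (4 * Cc * K / (Re (kappa h h) * c)) ltac:(lra)) as [Mt HMt].
    destruct (nn_big beta n0 ltac:(lra)) as [Mn HMn].
    exists (exp (exp (Rmax M1 (Rmax Mt Mn)))). intros T HT.
    assert (T1 : exp (exp M1) <= T) by (eapply Rle_trans; [apply ee_mono, Rmax_l| apply HT]).
    assert (T2 : exp (exp Mt) <= T) by (eapply Rle_trans; [apply ee_mono; eapply Rle_trans; [apply Rmax_l| apply Rmax_r]| apply HT]).
    assert (T3 : exp (exp Mn) <= T) by (eapply Rle_trans; [apply ee_mono; eapply Rle_trans; [apply Rmax_r| apply Rmax_r]| apply HT]).
    destruct (HM1 T T1) as [HP HN2].
    eapply Rle_trans. apply HK; auto.
    apply comb; auto; try lra; apply Hpos; auto.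
  - assert (sigma = 1) by lra. subst sigma.
    destruct (psi_lower_1 beta ltac:(lra)) as [M1 HM1].
    exists (fun h => Re (kappa h h) * / 2 / (4 * Cc)). split.
    { intros h Hh. apply Rdiv_lt_0_compat. apply Rmult_lt_0_compat; auto. lra. lra. }
    apply (fin_unif (fun h T => jsign H h * Ssum H G a Cc xe beta T h 1 <=
        - (Re (kappa h h) * / 2 / (4 * Cc)) * ln (ln (ln T)))).
    intros h Hh.
    destruct (per_h H G a kappa h Cc xe beta 1 D Hcorr Hoff Hh (Hpos h Hh) ltac:(lra) HC1 HD HDb (Hsmall h Hh)) as [K [n0 HK]].
    destruct (target_1_big (4 * Cc * K / (Re (kappa h h) * / 2))) as [Mt HMt].
    destruct (nn_big beta n0 ltac:(lra)) as [Mn HMn].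
    exists (exp (exp (Rmax M1 (Rmax Mt Mn)))). intros T HT.
    assert (T1 : exp (exp M1) <= T) by (eapply Rle_trans; [apply ee_mono, Rmax_l| apply HT]).
    assert (T2 : exp (exp Mt) <= T) by (eapply Rle_trans; [apply ee_mono; eapply Rle_trans; [apply Rmax_l| apply Rmax_r]| apply HT]).
    assert (T3 : exp (exp Mn) <= T) by (eapply Rle_trans; [apply ee_mono; eapply Rle_trans; [apply Rmax_r| apply Rmax_r]| apply HT]).
    destruct (HM1 T T1) as [HP HN2].
    eapply Rle_trans. apply HK; auto.
    apply comb; auto; try lra; apply Hpos; auto.
Qed.
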